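(* For $a\in(0,1)$ and $x\in[0,1]$ define $$I(a,x):=-\int_0^{\pi}\operatorname{Im}\Bigl\{w_{a,x}(t)\Bigr\}\,\frac{dt}{\sqrt{a+1/a-2\cos t}},$$ where, with $z=e^{it}$, $w_{a,x}(t)=z^{1/4}\left(\frac{1-az}{z-a}\right)^{1/4}\left(\frac{z+x}{xz+1}\right)^{1/2}$, each root being the continuous branch along $t\in[0,\pi]$ taking the value $1$ at $t=0$. Let $\alpha\in(0,1)$ be the unique zero of $a\mapsto I(a,0)$ in $(0,1)$, and for each $a\in(0,\alpha)$ let $x_a\in(0,1)$ be the unique value of $x$ with $I(a,x_a)=0$. Then $\lim_{a\to0}x_a=1$.
   Context: It is established (independently of this statement) that $I(a,x)$ is increasing in $x$, that $a\mapsto I(a,0)$ has exactly one zero $\alpha$ in $(0,1)$, and that for each $a\in(0,\alpha)$ there is a unique $x_a\in(0,1)$ with $I(a,x_a)=0$. *)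

(* Defs.v *)
From Stdlib Require Import Reals.
From Coquelicot Require Import Coquelicot.
Open Scope R_scope.

(* Principal argument of a nonzero complex number, with values in (-PI, PI]. *)
Definition Arg (w : C) : R :=
  if Rle_dec 0 (Im w) then acos (Re w / Cmod w) else - acos (Re w / Cmod w).

Definition zt (t : R) : C := (cos t, sin t).

(* Continuous phase along t in [0,PI] (value 0 at t = 0) of
     z^{1/4} ((1-az)/(z-a))^{1/4} ((z+x)/(xz+1))^{1/2},
   written out factor by factor:
   - z^{1/4} = e^{it/4};
   - ((1-az)/(z-a))^{1/4} = e^{i (Arg(1-az) - Arg(z-a))/4}  (unimodular ratio;
     Re(1-az) > 0 and Im(z-a) = sin t >= 0, so this phase is continuous, 0 at t=0);
   - ((z+x)/(xz+1))^{1/2} = e^{i (Arg(z+x) - Arg(xz+1))/2}  (unimodular ratio;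
     Im(z+x) = sin t >= 0 and Re(xz+1) > 0 for x < 1). *)
Definition phase (a x t : R) : R :=
  let z := zt t in
  t / 4
  + (Arg (Cminus 1 (Cmult (RtoC a) z)) - Arg (Cminus z (RtoC a))) / 4
  + (Arg (Cplus z (RtoC x)) - Arg (Cplus (Cmult (RtoC x) z) 1)) / 2.

Definition w (a x t : R) : C := (cos (phase a x t), sin (phase a x t)).

Definition I (a x : R) : R :=
  - RInt (fun t => Im (w a x t) / sqrt (a + / a - 2 * cos t)) 0 PI.

(* Main.v *)
Require Import Defs.
From Stdlib Require Import Reals Lra Psatz.
From Coquelicot Require Import Coquelicot.
Open Scope R_scope.

Lemma Cmod_eq w : Cmod w = sqrt (Re w ^ 2 + Im w ^ 2).
Proof. reflexivity. Qed.

Lemma acos_re w : 0 < Re w -> acos (Re w / Cmod w) = atan (Rabs (Im w) / Re w).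
Proof.
  intros H. rewrite Cmod_eq.
  set (p := Re w) in *. set (q := Im w).
  assert (HM2: sqrt (p^2+q^2)^2 = p^2+q^2) by (rewrite pow2_sqrt; nra).
  set (M := sqrt (p^2+q^2)) in *.
  assert (HM: 0 < M) by (unfold M; apply sqrt_lt_R0; nra).
  rewrite acos_atan by (apply Rdiv_lt_0_compat; lra).
  f_equal.
  assert (Hq: Rabs q * Rabs q = q * q) by (rewrite <- Rabs_mult; apply Rabs_right; nra).
  assert (E: 1 - (p/M)² = (Rabs q / M)²).
  { unfold Rsqr. replace (Rabs q / M * (Rabs q / M)) with (q*q/(M*M)) by (rewrite <- Hq; field; lra).
    assert (q*q = M*M - p*p) by nra. rewrite H0. field. lra. }
  rewrite E, sqrt_Rsqr.
  - field. lra.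
  - apply Rdiv_le_0_compat; [apply Rabs_pos|lra].
Qed.

Lemma Arg_neg w : Im w <= 0 -> 0 < Re w -> Arg w = - atan (Rabs (Im w) / Re w).
Proof.
  intros H1 H2. unfold Arg. destruct (Rle_dec 0 (Im w)).
  - assert (Im w = 0) by lra. rewrite acos_re by lra. rewrite H, Rabs_R0.
    replace (0 / Re w) with 0 by (field; lra). rewrite atan_0. lra.
  - rewrite acos_re by lra. reflexivity.
Qed.

Lemma Arg_pos w : 0 <= Im w -> Arg w = acos (Re w / Cmod w).
Proof. intros H. unfold Arg. destruct (Rle_dec 0 (Im w)); [reflexivity|lra]. Qed.

Lemma Arg_pos' w : 0 <= Im w -> 0 < Re w -> Arg w = atan (Im w / Re w).
Proof. intros H1 H2. rewrite Arg_pos, acos_re by lra. rewrite Rabs_right by lra. reflexivity. Qed.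

Lemma atan_q y Q M : 0 < Q -> 0 < M -> M^2 = Q^2 + y^2 ->
  cos (atan (y/Q)) = Q/M /\ sin (atan (y/Q)) = y/M.
Proof.
  intros HQ HM HE. rewrite cos_atan, sin_atan.
  assert (E: sqrt (1 + (y/Q)²) = M/Q).
  { rewrite <- (sqrt_Rsqr (M/Q)) by (apply Rdiv_le_0_compat; lra).
    f_equal. unfold Rsqr.
    replace (M/Q*(M/Q)) with ((M*M)/(Q*Q)) by (field; lra).
    replace (M*M) with (Q*Q+y*y) by nra. field; lra. }
  rewrite E. split; field; lra.
Qed.

Lemma atan_nonneg v : 0 <= v -> 0 <= atan v.
Proof.
  intros H. destruct (Req_dec v 0) as [->|Hv]. rewrite atan_0; lra.
  rewrite <- atan_0. left. apply atan_increasing. lra.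
Qed.

Lemma acos_eq th r : 0 <= th <= PI -> cos th = r -> acos r = th.
Proof. intros H <-. apply acos_cos; lra. Qed.

Lemma trig_basics t : 0 <= t <= PI -> 0 <= sin t /\ -1 <= cos t <= 1 /\ sin t ^ 2 + cos t ^ 2 = 1.
Proof.
  intros H. split. apply sin_ge_0; lra. split. apply COS_bound.
  pose proof (sin2_cos2 t). unfold Rsqr in H0. nra.
Qed.

Lemma A1 a t : 0 < a < 1 -> 0 <= t <= PI ->
  Arg (Cminus 1 (Cmult (RtoC a) (zt t))) = - atan (a * sin t / (1 - a * cos t)).
Proof.
  intros Ha Ht. destruct (trig_basics t Ht) as [Hs [Hc Hsc]].
  assert (Re (Cminus 1 (Cmult (RtoC a) (zt t))) = 1 - a * cos t) by (unfold zt, Cminus, Cplus, Copp, Cmult, RtoC, Re; simpl; ring).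
  assert (Im (Cminus 1 (Cmult (RtoC a) (zt t))) = - (a * sin t)) by (unfold zt, Cminus, Cplus, Copp, Cmult, RtoC, Im; simpl; ring).
  rewrite Arg_neg; rewrite ?H, ?H0; try nra.
  rewrite Rabs_Ropp, Rabs_right by nra. reflexivity.
Qed.

Lemma A4 x t : 0 <= x < 1 -> 0 <= t <= PI ->
  Arg (Cplus (Cmult (RtoC x) (zt t)) 1) = atan (x * sin t / (1 + x * cos t)).
Proof.
  intros Ha Ht. destruct (trig_basics t Ht) as [Hs [Hc Hsc]].
  assert (Re (Cplus (Cmult (RtoC x) (zt t)) 1) = 1 + x * cos t) by (unfold zt, Cminus, Cplus, Copp, Cmult, RtoC, Re; simpl; ring).
  assert (Im (Cplus (Cmult (RtoC x) (zt t)) 1) = x * sin t) by (unfold zt, Cminus, Cplus, Copp, Cmult, RtoC, Im; simpl; ring).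
  rewrite Arg_pos'; rewrite ?H, ?H0; try nra.
Qed.

Lemma A2 a t : 0 < a < 1 -> 0 <= t <= PI ->
  Arg (Cminus (zt t) (RtoC a)) = t + atan (a * sin t / (1 - a * cos t)).
Proof.
  intros Ha Ht. destruct (trig_basics t Ht) as [Hs [Hc Hsc]].
  assert (HR: Re (Cminus (zt t) (RtoC a)) = cos t - a) by (unfold zt, Cminus, Cplus, Copp, Cmult, RtoC, Re; simpl; ring).
  assert (HI: Im (Cminus (zt t) (RtoC a)) = sin t) by (unfold zt, Cminus, Cplus, Copp, Cmult, RtoC, Im; simpl; ring).
  rewrite Arg_pos by (rewrite HI; lra). rewrite Cmod_eq, HR, HI.
  set (c := cos t) in *. set (s := sin t) in *.
  assert (HM2: sqrt ((c-a)^2+s^2)^2 = (c-a)^2+s^2) by (rewrite pow2_sqrt; nra).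
  set (M := sqrt ((c-a)^2+s^2)) in *.
  assert (HM: 0 < M) by (unfold M; apply sqrt_lt_R0; nra).
  assert (HQ: 0 < 1 - a*c) by nra.
  destruct (atan_q (a*s) (1 - a*c) M HQ HM) as [Hco Hsi]. rewrite HM2. nra.
  apply acos_eq.
  - pose proof (atan_nonneg (a*s/(1-a*c))) as Hn.
    assert (0 <= a*s/(1-a*c)) by (apply Rdiv_le_0_compat; nra).
    split. lra.
    destruct (Rle_dec (t + atan (a*s/(1-a*c))) PI) as [|Hgt]; [assumption|].
    exfalso. pose proof (atan_bound (a*s/(1-a*c))).
    set (y := t + atan (a * s / (1 - a * c)) - PI).
    assert (0 < sin y) by (apply sin_gt_0; unfold y; lra).
    assert (sin (y + PI) = s / M).
    { unfold y. replace (t + atan (a * s / (1 - a * c)) - PI + PI) with (t + atan (a * s / (1 - a * c))) by ring.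
      rewrite sin_plus, Hco, Hsi. fold c s. field_simplify_eq; [|lra]. nra. }
    rewrite neg_sin in H2. assert (0 <= s/M) by (apply Rdiv_le_0_compat; lra). lra.
  - rewrite cos_plus, Hco, Hsi. fold c s. field_simplify_eq; [|lra]. nra.
Qed.

Lemma A3 x t : 0 <= x < 1 -> 0 <= t <= PI ->
  Arg (Cplus (zt t) (RtoC x)) = t - atan (x * sin t / (1 + x * cos t)).
Proof.
  intros Ha Ht. destruct (trig_basics t Ht) as [Hs [Hc Hsc]].
  assert (HR: Re (Cplus (zt t) (RtoC x)) = cos t + x) by (unfold zt, Cminus, Cplus, Copp, Cmult, RtoC, Re; simpl; ring).
  assert (HI: Im (Cplus (zt t) (RtoC x)) = sin t) by (unfold zt, Cminus, Cplus, Copp, Cmult, RtoC, Im; simpl; ring).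
  rewrite Arg_pos by (rewrite HI; lra). rewrite Cmod_eq, HR, HI.
  set (c := cos t) in *. set (s := sin t) in *.
  assert (HM2: sqrt ((c+x)^2+s^2)^2 = (c+x)^2+s^2) by (rewrite pow2_sqrt; nra).
  set (M := sqrt ((c+x)^2+s^2)) in *.
  assert (HM: 0 < M) by (unfold M; apply sqrt_lt_R0; nra).
  assert (HQ: 0 < 1 + x*c) by nra.
  destruct (atan_q (x*s) (1 + x*c) M HQ HM) as [Hco Hsi]. rewrite HM2. nra.
  apply acos_eq.
  - pose proof (atan_nonneg (x*s/(1+x*c))) as Hn.
    assert (0 <= x*s/(1+x*c)) by (apply Rdiv_le_0_compat; nra).
    split; [|lra].
    destruct (Rle_dec 0 (t - atan (x*s/(1+x*c)))) as [|Hgt]; [assumption|].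
    exfalso. pose proof (atan_bound (x*s/(1+x*c))).
    set (y := atan (x*s/(1+x*c)) - t).
    assert (0 < sin y) by (apply sin_gt_0; unfold y; lra).
    assert (sin (- y) = s / M).
    { unfold y. replace (- (atan (x*s/(1+x*c)) - t)) with (t - atan (x*s/(1+x*c))) by ring.
      rewrite sin_minus, Hco, Hsi. fold c s. field_simplify_eq; [|lra]. nra. }
    rewrite sin_neg in H2. assert (0 <= s/M) by (apply Rdiv_le_0_compat; lra). lra.
  - rewrite cos_minus, Hco, Hsi. fold c s. field_simplify_eq; [|lra]. nra.
Qed.

Lemma phase_eq a x t : 0 < a < 1 -> 0 <= x < 1 -> 0 <= t <= PI ->
  phase a x t = t/2 - atan (x * sin t / (1 + x * cos t)) - atan (a * sin t / (1 - a * cos t))/2.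
Proof.
  intros Ha Hx Ht. unfold phase.
  rewrite A1, A2, A3, A4 by assumption. field.
Qed.

Lemma alg (x a S C Q s c P N D: R) : s = 2*S*C -> c = C*C - S*S -> P = 1 + x*c ->
  N = S*Q - C*(a*s) -> D = C*Q + S*(a*s) -> S*S + C*C = 1 ->
  N*P - x*s*D = S*(Q*(1-x) - 2*a*C*C*(1+x)).
Proof.
  intros -> -> -> -> -> H.
  transitivity (S*(Q*(1-x) - 2*a*C*C*(1+x)) - (S*S+C*C-1)*x*S*(Q+2*a*C*C)); [ring|].
  replace (S*S+C*C-1) with 0 by lra. ring.
Qed.

Lemma F_pos a x t : 0 < a < 1 -> 0 <= x < 1 -> 4*a < (1-x)*(1-a) -> 0 < t < PI ->
  0 < t/2 - atan (x * sin t / (1 + x * cos t)) - atan (a * sin t / (1 - a * cos t))/2 < PI.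
Proof.
  intros Ha Hx Hax Ht.
  assert (Hs: 0 < sin t) by (apply sin_gt_0; lra).
  pose proof (COS_bound t) as Hc.
  assert (HP: 0 < 1 + x * cos t) by nra.
  assert (HQ: 0 < 1 - a * cos t) by nra.
  pose proof (atan_nonneg (x * sin t / (1 + x * cos t)) ltac:(apply Rdiv_le_0_compat; nra)) as Hu.
  pose proof (atan_nonneg (a * sin t / (1 - a * cos t)) ltac:(apply Rdiv_le_0_compat; nra)) as Hv.
  split; [|lra].
  cut (atan (x * sin t / (1 + x * cos t)) < t/2 - atan (a * sin t / (1 - a * cos t))); [lra|].
  set (th := t/2).
  assert (Ht2: t = 2 * th) by (unfold th; field).
  assert (HS: 0 < sin th) by (apply sin_gt_0; unfold th; lra).
  assert (HC: 0 < cos th) by (apply cos_gt_0; unfold th; lra).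
  assert (Hsin: sin t = 2 * sin th * cos th) by (rewrite Ht2; apply sin_2a).
  assert (Hcos: cos t = cos th * cos th - sin th * sin th) by (rewrite Ht2; apply cos_2a).
  assert (HSC: sin th * sin th + cos th * cos th = 1) by (pose proof (sin2_cos2 th); unfold Rsqr in *; lra).
  set (s := sin t) in *. set (c := cos t) in *. set (S := sin th) in *. set (C := cos th) in *.
  set (Q := 1 - a*c) in *.
  assert (HM2: sqrt (Q^2 + (a*s)^2)^2 = Q^2 + (a*s)^2) by (rewrite pow2_sqrt; nra).
  set (M := sqrt (Q^2 + (a*s)^2)) in *.
  assert (HM: 0 < M) by (unfold M; apply sqrt_lt_R0; nra).
  destruct (atan_q (a*s) Q M HQ HM HM2) as [Hco Hsi].
  pose proof (atan_bound (a*s/Q)).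
  assert (Hth: 0 < th < PI/2) by (unfold th; lra).
  rewrite <- (atan_tan (th - atan (a*s/Q))) by lra.
  apply atan_increasing. unfold tan.
  rewrite sin_minus, cos_minus, Hco, Hsi. fold S C.
  set (N := S*Q - C*(a*s)). set (D := C*Q + S*(a*s)).
  assert (HD: 0 < D) by (unfold D; assert (0 < C*Q) by (apply Rmult_lt_0_compat; lra); assert (0 < S*(a*s)) by (repeat apply Rmult_lt_0_compat; lra); lra).
  assert (E1: C * (Q / M) + S * (a * s / M) = D / M) by (unfold D; field; lra).
  assert (E2: S * (Q / M) - C * (a * s / M) = N / M) by (unfold N; field; lra).
  rewrite E1, E2. replace (N/M/(D/M)) with (N/D) by (field; lra).
  assert (Hkey: N*(1 + x*c) - x*s*D = S*(Q*(1-x) - 2*a*C*C*(1+x)))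
    by (apply alg with (c := c); auto).
  assert (HQ1: 1 - a <= Q) by (unfold Q; nra).
  assert (HCC: C*C <= 1) by nra.
  assert (Hpos: 0 < Q*(1-x) - 2*a*C*C*(1+x)).
  { assert ((1-a)*(1-x) <= Q*(1-x)) by nra.
    assert (C*C*(1+x) <= 2) by nra.
    assert (2*a*C*C*(1+x) <= 4*a) by nra. lra. }
  assert (0 < (N*(1 + x*c) - x*s*D)/((1+x*c)*D)) by (apply Rdiv_lt_0_compat; nra).
  replace ((N*(1 + x*c) - x*s*D)/((1+x*c)*D)) with (N/D - x*s/(1+x*c)) in H0 by (field; lra).
  lra.
Qed.

Lemma I_neg a x : 0 < a < 1 -> 0 <= x < 1 -> 4*a < (1-x)*(1-a) -> I a x < 0.
Proof.
  intros Ha Hx Hax. unfold I.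
  set (G := fun t => sin (t/2 - atan (x * sin t / (1 + x * cos t)) - atan (a * sin t / (1 - a * cos t))/2) / sqrt (a + / a - 2 * cos t)).
  pose proof PI_RGT_0.
  assert (E: RInt (fun t => Im (w a x t) / sqrt (a + / a - 2 * cos t)) 0 PI = RInt G 0 PI).
  { apply RInt_ext. intros t Ht. rewrite Rmin_left, Rmax_right in Ht by lra.
    unfold w, G, Im. simpl. rewrite phase_eq by lra. reflexivity. }
  assert (Hia: a * / a = 1) by (field; lra).
  assert (Hia2: 0 < / a) by (apply Rinv_0_lt_compat; lra).
  assert (Hden: forall t, 0 < a + / a - 2 * cos t).
  { intros t. pose proof (COS_bound t). nra. }
  rewrite E. cut (0 < RInt G 0 PI); [lra|].
  apply RInt_gt_0; [lra| |].
  - intros t Ht. unfold G. apply Rdiv_lt_0_compat.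
    + apply sin_gt_0; apply F_pos; lra.
    + apply sqrt_lt_R0, Hden.
  - intros t Ht. unfold G. apply (ex_derive_continuous (fun t => sin (t/2 - atan (x * sin t / (1 + x * cos t)) - atan (a * sin t / (1 - a * cos t))/2) / sqrt (a + / a - 2 * cos t))).
    auto_derive. pose proof (COS_bound t). pose proof (Hden t).
    repeat split; try nra.
    apply Rgt_not_eq. apply sqrt_lt_R0. lra.
Qed.

Theorem lemma6p1 (alpha : R) (xa : R -> R) :
  0 < alpha < 1 ->
  I alpha 0 = 0 ->
  (forall b, 0 < b < 1 -> I b 0 = 0 -> b = alpha) ->
  (forall a, 0 < a < alpha ->
     0 < xa a < 1 /\ I a (xa a) = 0 /\
     (forall y, 0 < y < 1 -> I a y = 0 -> y = xa a)) ->
  filterlim xa (at_right 0) (locally 1).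
Proof.
  intros Hal _ _ Hx.
  apply filterlim_locally. intros eps.
  pose proof (cond_pos eps) as He.
  assert (Hd: 0 < Rmin alpha (eps/(4+eps))).
  { apply Rmin_pos; [lra| apply Rdiv_lt_0_compat; lra]. }
  exists (mkposreal _ Hd). intros y Hy Hy0.
  unfold ball in Hy; simpl in Hy; unfold AbsRing_ball, abs, minus, plus, opp in Hy; simpl in Hy.
  unfold ball; simpl; unfold AbsRing_ball, abs, minus, plus, opp; simpl.
  rewrite Ropp_0, Rplus_0_r, Rabs_right in Hy by lra.
  assert (Hy1: y < alpha) by (pose proof (Rmin_l alpha (eps/(4+eps))); lra).
  assert (Hy2: y < eps/(4+eps)) by (pose proof (Rmin_r alpha (eps/(4+eps))); lra).
  assert (Hy3: y*(4+eps) < eps/(4+eps)*(4+eps)) by (apply Rmult_lt_compat_r; lra).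
  replace (eps/(4+eps)*(4+eps)) with (pos eps) in Hy3 by (field; lra).
  destruct (Hx y (conj Hy0 Hy1)) as [Hxy [HI _]].
  destruct (Rlt_or_le (1 - xa y) eps) as [Hlt|Hge].
  - rewrite Rabs_left by lra. lra.
  - exfalso. assert (I y (xa y) < 0).
    { apply I_neg; try lra.
      assert (eps*(1-y) <= (1 - xa y)*(1-y)) by (apply Rmult_le_compat_r; lra). nra. }
    lra.
Qed.
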